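(* Let $G=\bigcap_{i\in\mathcal I}G_i$ be a nonempty bounded domain in $\mathbb R^d$, where $\mathcal I$ is a nonempty finite index set and each $G_i$ is a nonempty domain. Then the function $D:[0,\infty)\to[0,\infty]$ defined by $D(0)=0$ and, for $r>0$, $$D(r)=\sup_{\emptyset\ne\mathcal J\subset\mathcal I}\sup\Big\{\mathrm{dist}\Big(x,\bigcap_{j\in\mathcal J}(\partial G_j\cap\partial G)\Big):x\in\bigcap_{j\in\mathcal J}U_r(\partial G_j\cap\partial G)\Big\}$$ satisfies $D(r)\to0$ as $r\to0$.
   Context: $\mathrm{dist}(x,S)=\inf\{\|x-y\|:y\in S\}$ with $\mathrm{dist}(x,\emptyset)=\infty$; for $r>0$, $U_r(S)=\{x\in\mathbb R^d:\mathrm{dist}(x,S)\le r\}$, with $U_r(\emptyset)=\emptyset$; the supremum over an empty set is $0$. *)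

(* Defs.v *)
(* R^d is 'rV[R]_d over R : realType, with its
   (product = Euclidean) topology; the norm ||.|| is the Euclidean norm. *)
From HB Require Import structures.
From mathcomp Require Import all_boot all_order all_algebra.
From mathcomp Require Import all_classical all_reals all_analysis.
Set Implicit Arguments. Unset Strict Implicit. Unset Printing Implicit Defensive.
Import Order.TTheory GRing.Theory Num.Theory.
Import numFieldNormedType.Exports.
Local Open Scope classical_set_scope.
Local Open Scope ring_scope.

Section Defs.
Variables (R : realType) (d : nat).
Local Notation V := 'rV[R]_d.

Definition enorm (x : V) : R := Num.sqrt (\sum_(i < d) x 0 i ^+ 2).

Definition boundary (A : set V) : set V := closure A `\` interior A.

Definition domain (A : set V) : Prop := [/\ A !=set0, open A & connected A].

Definition ebounded (A : set V) : Prop := exists M : R, forall x, A x -> enorm x <= M.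

(* dist(x,S) = inf {||x-y|| : y in S}, = +oo for S empty *)
Definition dist (x : V) (S : set V) : \bar R :=
  ereal_inf [set (enorm (x - y))%:E | y in S].

(* U_r(S) = {x | dist(x,S) <= r}  (empty when S is empty) *)
Definition Unbhd (r : R) (S : set V) : set V := [set x | (dist x S <= r%:E)%E].

Definition sup0 (S : set (\bar R)) : \bar R :=
  if pselect (S = set0) then 0%E else ereal_sup S.

(* the function D of the statement; D(r) = 0 for r <= 0 (only r >= 0 matters) *)
Definition Dfun (I : finType) (Gi : I -> set V) (r : R) : \bar R :=
  let G := \bigcap_(i in [set: I]) Gi i in
  let B := fun j => boundary (Gi j) `&` boundary G in
  if r <= 0 then 0%E else
  sup0 [set sup0 [set dist x (\bigcap_(j in J) B j) | x in
                     \bigcap_(j in J) Unbhd r (B j)]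
       | J in [set J : set I | J !=set0]].
End Defs.

(* Main.v *)
Require Import Defs.
From HB Require Import structures.
From mathcomp Require Import all_boot all_order all_algebra.
From mathcomp Require Import all_classical all_reals all_analysis.
From mathcomp Require Import ring lra.
Import Order.TTheory GRing.Theory Num.Theory.
Import numFieldNormedType.Exports.
Local Open Scope classical_set_scope.
Local Open Scope ring_scope.

Section E.
Variables (R : realType) (d : nat).
Local Notation V := 'rV[R]_d.

Lemma CS (a b : 'I_d -> R) :
  (\sum_i a i * b i) ^+ 2 <= (\sum_i a i ^+ 2) * (\sum_i b i ^+ 2).
Proof.
set A := \sum_i a i ^+ 2; set B := \sum_i b i ^+ 2; set C := \sum_i a i * b i.
have B0 : 0 <= B by apply: sumr_ge0 => i _; exact: sqr_ge0.
have [Bz|Bpos] := eqVneq B 0.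
  have bz : forall i, b i = 0.
    move=> i; apply/eqP; rewrite -sqrf_eq0; apply/eqP.
    move/eqP: Bz; rewrite psumr_eq0; last by move=> j _; exact: sqr_ge0.
    by move=> /allP /(_ i (mem_index_enum _)) /eqP.
  have -> : C = 0 by rewrite /C big1 // => i _; rewrite bz mulr0.
  by rewrite Bz expr0n /= mulr0.
have Bp : 0 < B by rewrite lt_def Bpos B0.
have H : 0 <= \sum_i (B * a i - C * b i) ^+ 2 by apply: sumr_ge0 => i _; exact: sqr_ge0.
have E : \sum_i (B * a i - C * b i) ^+ 2 = B * (A * B - C ^+ 2).
  rewrite (eq_bigr (fun i => B ^+ 2 * a i ^+ 2 - (2 * B * C) * (a i * b i) + C ^+ 2 * b i ^+ 2)); last by move=> i _; ring.
  rewrite big_split /= sumrB -!mulr_sumr -/A -/B -/C; ring.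
rewrite E in H.
by move: H; rewrite pmulr_rge0 // subr_ge0 mulrC.
Qed.

Lemma enorm_ge0 (x : V) : 0 <= enorm x.
Proof. exact: sqrtr_ge0. Qed.

Lemma sum_sq_ge0 (x : V) : 0 <= \sum_(i < d) x 0 i ^+ 2.
Proof. by apply: sumr_ge0 => i _; exact: sqr_ge0. Qed.

Lemma enormD (a b : V) : enorm (a + b) <= enorm a + enorm b.
Proof.
rewrite /enorm.
set A := \sum_(i < d) a 0 i ^+ 2; set B := \sum_(i < d) b 0 i ^+ 2.
have A0 : 0 <= A by exact: sum_sq_ge0.
have B0 : 0 <= B by exact: sum_sq_ge0.
have sp : 0 <= Num.sqrt A + Num.sqrt B by rewrite addr_ge0 // sqrtr_ge0.
apply: (le_trans (y := Num.sqrt ((Num.sqrt A + Num.sqrt B) ^+ 2))); last first.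
  by rewrite sqrtr_sqr ger0_norm.
rewrite ler_sqrt ?sqr_ge0 //.
have -> : \sum_(i < d) (a + b) 0 i ^+ 2 = A + 2 * (\sum_i a 0 i * b 0 i) + B.
  rewrite (eq_bigr (fun i => a 0 i ^+ 2 + 2 * (a 0 i * b 0 i) + b 0 i ^+ 2)); last by move=> i _; rewrite !mxE; ring.
  by rewrite !big_split /= -mulr_sumr.
have HC : \sum_i a 0 i * b 0 i <= Num.sqrt A * Num.sqrt B.
  apply: (le_trans (ler_norm _)).
  rewrite -sqrtr_sqr -sqrtrM // ler_sqrt; last by rewrite mulr_ge0.
  exact: (CS (fun i => a 0 i) (fun i => b 0 i)).
rewrite sqrrD !sqr_sqrtr //.
lra.
Qed.

Lemma enormN (a : V) : enorm (- a) = enorm a.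
Proof. by rewrite /enorm; congr Num.sqrt; apply: eq_bigr => i _; rewrite mxE sqrrN. Qed.

Lemma enormB (a b : V) : enorm (a - b) = enorm (b - a).
Proof. by rewrite -enormN opprB. Qed.

Lemma coord_le_mx (x : V) i : `|x 0 i| <= `|x|.
Proof.
have -> : `|x| = mx_norm x by []. rewrite mx_normrE.
exact: (le_bigmax _ (fun ij : 'I_1 * 'I_d => `|x ij.1 ij.2|) (0, i)).
Qed.

Lemma coord_le_enorm (x : V) i : `|x 0 i| <= enorm x.
Proof.
rewrite /enorm -sqrtr_sqr ler_sqrt; last exact: sum_sq_ge0.
rewrite (bigD1 i) //= lerDl; apply: sumr_ge0 => j _; exact: sqr_ge0.
Qed.

Lemma mx_le_enorm (x : V) : `|x| <= enorm x.
Proof.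
have -> : `|x| = mx_norm x by []. rewrite mx_normrE.
apply: bigmax_le; first exact: enorm_ge0.
move=> [i j] _ /=; rewrite (ord1 i); exact: coord_le_enorm.
Qed.

Lemma enorm_le_mx (x : V) : enorm x <= d%:R * `|x|.
Proof.
have m0 : 0 <= `|x| by [].
apply: (le_trans (y := Num.sqrt ((d%:R * `|x|) ^+ 2))); last first.
  by rewrite sqrtr_sqr ger0_norm // mulr_ge0.
rewrite /enorm ler_sqrt ?sqr_ge0 //.
apply: (le_trans (y := \sum_(i < d) `|x| ^+ 2)).
  apply: ler_sum => i _; rewrite -real_normK ?num_real //.
  by rewrite lerXn2r ?nnegrE // coord_le_mx.
rewrite sumr_const card_ord -mulr_natl exprMn.
have h1 : d%:R = 0 :> R \/ 1 <= d%:R :> R.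
  by case: (d) => [|n]; [left|right; rewrite ler1n].
have h2 : 0 <= `|x| ^+ 2 by exact: sqr_ge0.
nra.
Qed.

Local Open Scope ereal_scope.

Lemma dist_le (x : V) (S : set V) y : S y -> dist x S <= (enorm (x - y))%:E.
Proof. by move=> Sy; apply: ge_ereal_inf; exists (enorm (x - y))%:E => //; exists y. Qed.

Lemma dist_ge0 (x : V) (S : set V) : 0 <= dist x S.
Proof. by apply/ereal_infP => _ [y Sy <-]; rewrite lee_fin enorm_ge0. Qed.

Lemma dist_lt (x : V) (S : set V) (c : R) : dist x S < c%:E ->
  exists2 y, S y & (enorm (x - y) < c)%R.
Proof. by move=> /ereal_inf_lt [_ [y Sy <-]]; rewrite lte_fin => h; exists y. Qed.

Lemma dist_tri (z x : V) (S : set V) : dist z S <= (enorm (z - x))%:E + dist x S.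
Proof.
rewrite -leeBlDl //; apply/ereal_infP => _ [b Sb <-].
rewrite leeBlDl //; apply: (le_trans (@dist_le z S b Sb)); rewrite -EFinD lee_fin.
have -> : (z - b = (z - x) + (x - b))%R by rewrite addrA subrK.
exact: enormD.
Qed.

Lemma dist_ne0 (x : V) (S : set V) (r : R) : dist x S <= r%:E -> S !=set0.
Proof.
move=> h; have [//|S0] := pselect (S !=set0).
have S0' : S = set0 by apply/seteqP; split=> y Sy //; exfalso; apply: S0; exists y.
move: h; rewrite S0' /dist.
by rewrite image_set0 ereal_inf0.
Qed.

Local Close Scope ereal_scope.

Lemma enorm0 : enorm (0 : V) = 0.
Proof.
rewrite /enorm big1 ?sqrtr0 // => i _; by rewrite mxE expr0n.
Qed.

Lemma ball_mx (y z : V) (e : R) : ball y e z -> `|y - z| < e.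
Proof. by rewrite -ball_normE. Qed.

Lemma mx_ball (y z : V) (e : R) : `|y - z| < e -> ball y e z.
Proof. by rewrite -ball_normE. Qed.

Lemma open_enorm_ball (y : V) (eta : R) : open [set z | enorm (z - y) < eta].
Proof.
rewrite openE => z /= hz; rewrite /interior; apply/nbhs_ballP.
set rho := (eta - enorm (z - y)) / (d%:R + 1).
have dp : 0 < d%:R + 1 :> R by rewrite ltr_wpDl.
have rp : 0 < rho by rewrite /rho divr_gt0 // subr_gt0.
exists rho => // w /ball_mx hw /=.
have h1 : enorm (w - y) <= enorm (w - z) + enorm (z - y).
  have -> : w - y = (w - z) + (z - y) by rewrite addrA subrK.
  exact: enormD.
have h2 : enorm (w - z) <= d%:R * `|z - w| by rewrite enormB; exact: enorm_le_mx.
have h3 : d%:R * `|z - w| <= d%:R * rho by rewrite ler_wpM2l // ltW.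
have h4 : (d%:R + 1) * rho = eta - enorm (z - y) by rewrite /rho mulrC divfK // gt_eqF.
have h5 : 0 <= d%:R :> R by [].
nra.
Qed.

Lemma closed_sep (S : set V) (y : V) : closed S -> ~ S y ->
  exists2 e, 0 < e & forall z b, ball y (e / 2) z -> S b -> e / 2 <= enorm (z - b).
Proof.
move=> cS nSy.
have : nbhs y (~` S) by apply: open_nbhs_nbhs; split => //; exact: closed_openC.
move=> /nbhs_ballP [e ep he]; exists e => // z b /ball_mx hz Sb.
rewrite leNgt; apply/negP => hlt.
have hb : `|z - b| < e / 2 by apply: le_lt_trans (mx_le_enorm _) hlt.
apply: (he b) => //; apply: mx_ball.
have -> : y - b = (y - z) + (z - b) by rewrite addrA subrK.
apply: (le_lt_trans (ler_normD _ _)).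
by rewrite (splitr e) ltrD.
Qed.

Lemma unif (T : eqType) (s : seq T) (P : T -> R -> Prop) :
  (forall t a b, 0 < a -> a <= b -> P t b -> P t a) ->
  (forall t, t \in s -> exists2 a, 0 < a & P t a) ->
  exists2 a, 0 < a & forall t, t \in s -> P t a.
Proof.
move=> mon; elim: s => [|x s IH] H; first by exists 1.
have [a1 a1p Pa1] := H x (mem_head _ _).
have [a2 a2p Pa2] : exists2 a, 0 < a & forall t, t \in s -> P t a.
  by apply: IH => t ts; apply: H; rewrite in_cons ts orbT.
exists (Num.min a1 a2); first by rewrite lt_min a1p a2p.
move=> t; rewrite in_cons => /orP [/eqP ->|ts].
  by apply: (mon _ _ a1) => //; [rewrite lt_min a1p a2p|rewrite ge_min lexx].
by apply: (mon _ _ a2) (Pa2 t ts); [rewrite lt_min a1p a2p|rewrite ge_min lexx orbT].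
Qed.

Lemma key (I : Type) (J : set I) (B : I -> set V) (j0 : I) :
  J j0 -> (forall j, closed (B j)) -> compact (B j0) ->
  forall eps : R, 0 < eps -> exists2 del : R, 0 < del & forall (r : R) (x : V), 0 < r -> r < del ->
   (forall j, J j -> (dist x (B j) <= r%:E)%E) -> (dist x (\bigcap_(j in J) B j) <= eps%:E)%E.
Proof.
move=> Jj0 cB cpt eps epsp.
set K := \bigcap_(j in J) B j.
pose Q (O : set V) (del : R) := (exists2 k, K k & forall z, O z -> enorm (z - k) < eps / 2) \/
   (exists2 j, J j & forall z, O z -> (del%:E <= dist z (B j))%E).
pose D := [set O : set V | open O /\ exists2 a, 0 < a & Q O a].
have cov : B j0 `<=` cover D id.
  move=> y By.
  have [Ky|nKy] := pselect (K y).
    exists [set z | enorm (z - y) < eps / 2]; last by rewrite /= subrr enorm0 divr_gt0.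
    split; first exact: open_enorm_ball.
    by exists 1 => //; left; exists y.
  have [j [Jj nBy]] : exists j, J j /\ ~ B j y.
    apply: contrapT => hn; apply: nKy => j Jj; apply: contrapT => nB; apply: hn; exists j; split => //.
  have [e ep he] := @closed_sep (B j) y (cB j) nBy.
  exists (ball y (e / 2)); last by apply: ballxx; rewrite divr_gt0.
  split; first exact: ball_open.
  exists (e / 2); first by rewrite divr_gt0.
  right; exists j => // z hz; apply/ereal_infP => _ [b Bb <-]; rewrite lee_fin; exact: he.
move: cpt; rewrite compact_cover => /(_ _ D id) [].
- by move=> O [].
- exact: cov.
move=> D' sub covD'.
have [del0 del0p Hdel0] : exists2 a, 0 < a & forall O, O \in finmap.enum_fset D' -> Q O a.
  apply: unif.
    move=> O a b ap ab [h|[j Jj h]]; [by left|right; exists j => // z Oz].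
    by apply: le_trans (h z Oz); rewrite lee_fin.
  move=> O OD'; have := sub O OD'; rewrite inE => -[_ [a ap Qa]]; by exists a.
exists (Num.min (del0 / 3) (eps / 4)); first by rewrite lt_min !divr_gt0.
move=> r x rp; rewrite lt_min => /andP [r1 r2] hx.
have [z Bz hz] : exists2 z, B j0 z & enorm (x - z) < 2 * r.
  apply: dist_lt; apply: le_lt_trans (hx _ Jj0) _; rewrite lte_fin; lra.
have [W WD' Wz] := covD' z Bz.
have := Hdel0 W WD'; case => [[k Kk hk]|[j Jj hj]].
  apply: le_trans (@dist_le x K k Kk) _; rewrite lee_fin.
  have -> : x - k = (x - z) + (z - k) by rewrite addrA subrK.
  apply: le_trans (enormD _ _) _; have := hk z Wz; lra.
exfalso.
have h1 := hj z Wz.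
have h2 := dist_tri z x (B j); rewrite enormB in h2.
have h3 := hx j Jj.
have h4 : (del0%:E <= (enorm (x - z))%:E + r%:E)%E.
  apply: le_trans h1 _; apply: le_trans h2 _; exact: leeD2l.
move: h4; rewrite -EFinD lee_fin; lra.
Qed.

Lemma bdry_closed (A : set V) : closed (boundary A).
Proof.
rewrite /boundary setDE; apply: closedI; first exact: closed_closure.
exact: open_closedC (@open_interior _ A).
Qed.

Lemma closure_bounded (A : set V) M : (forall x, A x -> enorm x <= M) ->
  forall x, closure A x -> `|x| <= M + 1.
Proof.
move=> hA x /(_ (ball x 1)) [].
  exact: nbhsx_ballx.
move=> g [Ag /ball_mx hg].
have -> : x = (x - g) + g by rewrite subrK.
apply: le_trans (ler_normD _ _) _; rewrite addrC; apply: lerD; last exact: ltW.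
exact: le_trans (mx_le_enorm g) (hA g Ag).
Qed.

Lemma compactC (A C : set V) M : (forall x, A x -> enorm x <= M) ->
  closed C -> C `<=` closure A -> compact C.
Proof.
move=> hA cC CA; apply: bounded_closed_compact => //.
exists (M + 1); split; first exact: num_real.
move=> N hN y Cy /=; apply: le_trans (ltW hN).
exact: closure_bounded hA y (CA y Cy).
Qed.

Lemma sup0_le (S : set (\bar R)) c : (0 <= c)%E -> (forall y, S y -> y <= c)%E -> (@Defs.sup0 R S <= c)%E.
Proof. by rewrite /Defs.sup0 => c0 h; case: (pselect (S = set0)) => [h0|h0] //; apply/ereal_supP. Qed.

Lemma sup0_ge0 (S : set (\bar R)) : (forall y, S y -> 0 <= y)%E -> (0 <= @Defs.sup0 R S)%E.
Proof.
rewrite /Defs.sup0 => h; case: (pselect (S = set0)) => // hS.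
have [y Sy] : S !=set0 by apply/set0P; apply/eqP.
by apply: le_ereal_sup_tmp; exists y => //; exact: h.
Qed.

End E.

Theorem lemmaA2 (R : realType) (d : nat) (I : finType) (Gi : I -> set 'rV[R]_d) :
  (0 < #|I|)%N ->
  (forall i, domain (Gi i)) ->
  domain (\bigcap_(i in [set: I]) Gi i) ->
  ebounded (\bigcap_(i in [set: I]) Gi i) ->
  Dfun Gi r @[r --> 0^'+] --> 0%E.
Proof.
move=> I0 dom domG [M hM].
set G := \bigcap_(i in [set: I]) Gi i.
set B := fun j => boundary (Gi j) `&` boundary G.
have cB : forall j, closed (B j) by move=> j; apply: closedI; exact: bdry_closed.
have kB : forall j, compact (B j).
  by move=> j; apply: (@compactC R d G (B j) M hM (cB j)) => x [_ [h _]].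
have main : forall eps : R, 0 < eps -> exists2 del : R, 0 < del &
    forall r, 0 < r -> r < del -> (0 <= Dfun Gi r <= eps%:E)%E.
  move=> eps ep.
  pose P (F : {set I}) (a : R) := (exists j0, j0 \in F) -> forall (r : R) (x : 'rV[R]_d), 0 < r -> r < a ->
    (forall j, j \in F -> (dist x (B j) <= r%:E)%E) ->
    (dist x (\bigcap_(j in [set j | j \in F]) B j) <= eps%:E)%E.
  have [del dp Hd] : exists2 a, 0 < a & forall F, F \in enum {set I} -> P F a.
    apply: unif.
      by move=> F a b ap ab h hF r x rp ra; apply: h => //; exact: lt_le_trans ab.
    move=> F _; have [[j0 jF]|nF] := pselect (exists j0, j0 \in F); last first.
      by exists 1 => // h; case: (nF h).
    have [a ap Ha] := @key R d I [set j | j \in F] B j0 jF cB (kB j0) eps ep.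
    by exists a => // _ r x rp ra hx; exact: (Ha r x rp ra hx).
  exists del => // r rp rd.
  rewrite /Dfun /=; case: ifPn => [r0|_]; first by exfalso; move: r0; rewrite leNgt rp.
  apply/andP; split.
    apply: sup0_ge0 => _ [J _ <-]; apply: sup0_ge0 => _ [x _ <-]; exact: dist_ge0.
  apply: sup0_le; first by rewrite lee_fin ltW.
  move=> _ [J [j0 Jj0] <-].
  apply: sup0_le; first by rewrite lee_fin ltW.
  move=> _ [x hx <-].
  pose F : {set I} := finset (fun j => `[< J j >]).
  have JF : J = [set j | j \in F] by apply/seteqP; split => j; rewrite /= inE asboolE.
  rewrite JF in hx *.
  apply: (Hd F (mem_enum _ _) _ r x rp rd).
    by exists j0; rewrite inE asboolE.
  by move=> j jF; apply: hx.
have ev : forall eps : R, 0 < eps ->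
    \forall r \near 0^'+, (0 <= Dfun Gi r <= eps%:E)%E.
  move=> eps ep; have [del dp Hd] := main eps ep.
  near=> r; apply: Hd; near: r; [exact: nbhs_right_gt|exact: nbhs_right_lt].
apply/fine_cvgP; split.
  have := ev 1 ltr01; apply: filterS => r /andP [h0 h1].
  by rewrite ge0_fin_numE // (le_lt_trans h1) // ltry.
apply/cvgrPdist_le => e ep.
have := ev e ep; apply: filterS => r /andP [h0 h1].
have f : Dfun Gi r = (fine (Dfun Gi r))%:E.
  by rewrite fineK // ge0_fin_numE // (le_lt_trans h1) // ltry.
rewrite f !lee_fin in h0 h1.
by rewrite /= sub0r normrN ger0_norm.
Unshelve. all: by end_near.
Qed.
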